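(* For a twisted $n$-gon with corner invariants $(x_0,\dots,x_{2n-1})$ define $$\mathcal{F}_1=\prod_{i=0}^{n-1}\frac{x_{2i}}{x_{2i}-1},\quad \mathcal{F}_2=\prod_{i=0}^{n-1}\frac{x_{2i+1}}{x_{2i+1}-1},\quad \mathcal{F}_3=\prod_{i=0}^{n-1}\frac{x_{2i}}{x_{2i+1}},\quad \mathcal{F}_4=\prod_{i=0}^{n-1}\frac{1-x_{2i}}{1-x_{2i+1}}.$$ Each $\mathcal{F}_j$ ($j=1,2,3,4$) is invariant under $T_3$ (and hence under $T_3^{-1}$): if $[P]$ and $T_3[P]$ are defined and $\mathcal{F}_j$ is defined (finite, with nonzero denominators) at both, then $\mathcal{F}_j(T_3[P])=\mathcal{F}_j([P])$. Equivalently, each $\mathcal{F}_j$ is invariant under the rational map $x\mapsto x'$ given by $x'_{2i}=x_{2i-2}\frac{x_{2i-4}+x_{2i-1}-1}{x_{2i-2}x_{2i-1}-(1-x_{2i+1})(1-x_{2i-4})}$, $x'_{2i+1}=x_{2i+3}\frac{x_{2i+2}+x_{2i+5}-1}{x_{2i+2}x_{2i+3}-(1-x_{2i+5})(1-x_{2i})}$ (indices mod $2n$).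
   Context: A twisted $n$-gon is a map $P:\mathbb{Z}\to\mathbb{RP}^2$ with every three consecutive points non-collinear and $P_{i+n}=M(P_i)$ for a fixed $M\in\mathrm{PGL}_3(\mathbb{R})$; $\mathcal{P}_n$ is the set of classes modulo projective equivalence. $T_3$ maps a $3$-nice ($P_i,P_{i+1},P_{i+3},P_{i+4}$ in general position for all $i$) twisted $n$-gon $P$ to $P'$ with $P'_i=P_iP_{i+3}\cap P_{i+1}P_{i+4}$; relabelling indices does not change the $\mathcal{F}_j$. Inverse cross ratio: for four collinear points $A,B,C,D$, map their line projectively to the $x$-axis with coordinates $a,b,c,d$ and set $\chi(A,B,C,D)=\frac{(a-b)(c-d)}{(a-c)(b-d)}$ (value in $\mathbb{R}\cup\{\infty\}$, projectively invariant). Corner invariants: $x_{2i}=\chi(P_{i-2},P_{i-1},P_{i-2}P_{i-1}\cap P_iP_{i+1},P_{i-2}P_{i-1}\cap P_{i+1}P_{i+2})$ and $x_{2i+1}=\chi(P_{i+2},P_{i+1},P_{i+2}P_{i+1}\cap P_iP_{i-1},P_{i+2}P_{i+1}\cap P_{i-1}P_{i-2})$, with $x_{j+2n}=x_j$. *)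

(* Defs.v *)
(* Points of RP^2 are represented by homogeneous coordinate
   column vectors in R^3 (nonzero vectors; all notions below are invariant
   under rescaling of representatives and under projective transformations). *)
From HB Require Import structures.
From mathcomp Require Import all_boot all_order all_algebra.
Set Implicit Arguments. Unset Strict Implicit. Unset Printing Implicit Defensive.
Import Order.TTheory GRing.Theory Num.Theory.
Local Open Scope ring_scope.

Section Proj.
Variable R : realFieldType.
Notation vec := 'cV[R]_3.

Definition dotv (u v : vec) : R := \sum_(i < 3) u i 0 * v i 0.

(* cross product: the line through two points / the intersection of two lines *)
Definition cross (u v : vec) : vec :=
  \col_(i < 3)
    (if i == 0 :> nat then u 1 0 * v 2 0 - u 2 0 * v 1 0
     else if i == 1 :> nat then u 2 0 * v 0 0 - u 0 0 * v 2 0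
     else u 0 0 * v 1 0 - u 1 0 * v 0 0).

(* triple product = det [a b c]; three points are collinear iff it vanishes *)
Definition det3 (a b c : vec) : R := dotv a (cross b c).

Definition meet (a b c d : vec) : vec := cross (cross a b) (cross c d).

(* Inverse cross ratio of four collinear points A,B,C,D (A <> B) in homogeneous
   coordinates: with O = A x B a point off the line AB, the bracket
   [X,Y] := det(O,X,Y) is (up to a common factor) the 2x2 determinant of
   homogeneous coordinates on the line, i.e. x - y in an affine coordinate.
   Hence chi = (a-b)(c-d)/((a-c)(b-d)) = num / den below. *)
Definition cr_num (A B C D : vec) : R :=
  let O := cross A B in det3 O A B * det3 O C D.
Definition cr_den (A B C D : vec) : R :=
  let O := cross A B in det3 O A C * det3 O B D.
Definition chi (A B C D : vec) : R := cr_num A B C D / cr_den A B C D.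
Definition chi_finite (A B C D : vec) : Prop := cr_den A B C D != 0.

Definition twisted_ngon (n : nat) (P : int -> vec) : Prop :=
  (exists M : 'M[R]_3, M \in unitmx /\
     forall i : int, exists c : R, c != 0 /\ P (i + n%:Z) = c *: (M *m P i))
  /\ forall i : int, det3 (P i) (P (i + 1)) (P (i + 2)) != 0.

Definition nice3 (P : int -> vec) : Prop :=
  forall i : int,
    [/\ det3 (P i) (P (i + 1)) (P (i + 3)) != 0,
        det3 (P i) (P (i + 1)) (P (i + 4)) != 0,
        det3 (P i) (P (i + 3)) (P (i + 4)) != 0 &
        det3 (P (i + 1)) (P (i + 3)) (P (i + 4)) != 0].

Definition T3 (P : int -> vec) : int -> vec :=
  fun i => meet (P i) (P (i + 3)) (P (i + 1)) (P (i + 4)).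

(* arguments of the corner invariants x_{2i} and x_{2i+1} *)
Definition xe_args (P : int -> vec) (i : int) :=
  (P (i - 2), P (i - 1),
   meet (P (i - 2)) (P (i - 1)) (P i) (P (i + 1)),
   meet (P (i - 2)) (P (i - 1)) (P (i + 1)) (P (i + 2))).
Definition xo_args (P : int -> vec) (i : int) :=
  (P (i + 2), P (i + 1),
   meet (P (i + 2)) (P (i + 1)) (P i) (P (i - 1)),
   meet (P (i + 2)) (P (i + 1)) (P (i - 1)) (P (i - 2))).

Definition app4 {T} (f : vec -> vec -> vec -> vec -> T)
  (a : vec * vec * vec * vec) : T :=
  let: (A, B, C, D) := a in f A B C D.

Definition xe (P : int -> vec) (i : int) : R := app4 chi (xe_args P i).
Definition xo (P : int -> vec) (i : int) : R := app4 chi (xo_args P i).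
Definition xe_fin (P : int -> vec) (i : int) : Prop := app4 chi_finite (xe_args P i).
Definition xo_fin (P : int -> vec) (i : int) : Prop := app4 chi_finite (xo_args P i).

Definition F1 (n : nat) P : R := \prod_(i < n) (xe P i / (xe P i - 1)).
Definition F2 (n : nat) P : R := \prod_(i < n) (xo P i / (xo P i - 1)).
Definition F3 (n : nat) P : R := \prod_(i < n) (xe P i / xo P i).
Definition F4 (n : nat) P : R := \prod_(i < n) ((1 - xe P i) / (1 - xo P i)).

Definition F1_def (n : nat) P : Prop :=
  forall i : 'I_n, xe_fin P i /\ xe P i - 1 != 0.
Definition F2_def (n : nat) P : Prop :=
  forall i : 'I_n, xo_fin P i /\ xo P i - 1 != 0.
Definition F3_def (n : nat) P : Prop :=
  forall i : 'I_n, [/\ xe_fin P i, xo_fin P i & xo P i != 0].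
Definition F4_def (n : nat) P : Prop :=
  forall i : 'I_n, [/\ xe_fin P i, xo_fin P i & 1 - xo P i != 0].

End Proj.

(* Main.v *)
Require Import Defs.
From HB Require Import structures.
From mathcomp Require Import all_boot all_order all_algebra.
From mathcomp Require Import ring lra.
Set Implicit Arguments. Unset Strict Implicit. Unset Printing Implicit Defensive.
Import Order.TTheory GRing.Theory Num.Theory.
Local Open Scope ring_scope.

Notation "n .+5" := (S n.+4) (at level 2, left associativity, format "n .+5") : nat_scope.
Notation "n .+6" := (S n.+5) (at level 2, left associativity, format "n .+6") : nat_scope.
Notation "n .+7" := (S n.+6) (at level 2, left associativity, format "n .+7") : nat_scope.
Notation "n .+8" := (S n.+7) (at level 2, left associativity, format "n .+8") : nat_scope.

Section S.
Variable R : realFieldType.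
Notation vec := 'cV[R]_3.
Implicit Types a b c d e f p q r u v w x y z o m : vec.

Lemma dotvE u v : dotv u v = u 0 0 * v 0 0 + u 1 0 * v 1 0 + u 2 0 * v 2 0.
Proof.
rewrite /dotv !big_ord_recl big_ord0 addr0 addrA.
have e0 : ord0 = 0 :> 'I_3 by apply: val_inj.
have e1 : lift ord0 ord0 = 1 :> 'I_3 by apply: val_inj.
have e2 : lift ord0 (lift ord0 ord0) = 2 :> 'I_3 by apply: val_inj.
by rewrite e2 e1 e0.
Qed.

Lemma cr0 u v : (cross u v) 0 0 = u 1 0 * v 2 0 - u 2 0 * v 1 0.
Proof. by rewrite /cross mxE. Qed.
Lemma cr1 u v : (cross u v) 1 0 = u 2 0 * v 0 0 - u 0 0 * v 2 0.
Proof. by rewrite /cross mxE. Qed.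
Lemma cr2 u v : (cross u v) 2 0 = u 0 0 * v 1 0 - u 1 0 * v 0 0.
Proof. by rewrite /cross mxE. Qed.

Lemma vec3P u v : u 0 0 = v 0 0 -> u 1 0 = v 1 0 -> u 2 0 = v 2 0 -> u = v.
Proof.
move=> h0 h1 h2; apply/matrixP=> i j; rewrite (ord1 j).
case: i => [[|[|[|//]]] hi].
- by rewrite (_ : Ordinal hi = 0) //; apply: val_inj.
- by rewrite (_ : Ordinal hi = 1) //; apply: val_inj.
- by rewrite (_ : Ordinal hi = 2) //; apply: val_inj.
Qed.

Lemma det3E a b c : det3 a b c =
  a 0 0 * (b 1 0 * c 2 0 - b 2 0 * c 1 0) + a 1 0 * (b 2 0 * c 0 0 - b 0 0 * c 2 0)
  + a 2 0 * (b 0 0 * c 1 0 - b 1 0 * c 0 0).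
Proof. by rewrite /det3 dotvE cr0 cr1 cr2. Qed.

Lemma meetE1 a b c d : meet a b c d = det3 a b d *: c - det3 a b c *: d.
Proof.
rewrite /meet; apply: vec3P; rewrite ?(cr0,cr1,cr2) ?mxE ?det3E ?(cr0,cr1,cr2); ring.
Qed.

Ltac vsimpl := rewrite ?(cr0,cr1,cr2) ?mxE ?det3E ?dotvE ?(cr0,cr1,cr2) ?mxE.

Lemma det3_sw12 a b c : det3 a b c = - det3 b a c.
Proof. rewrite !det3E; ring. Qed.
Lemma det3_sw23 a b c : det3 a b c = - det3 a c b.
Proof. rewrite !det3E; ring. Qed.
Lemma det3_cyc a b c : det3 a b c = det3 b c a.
Proof. rewrite !det3E; ring. Qed.
Lemma det3_aab a b : det3 a a b = 0.
Proof. rewrite !det3E; ring. Qed.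
Lemma det3_aba a b : det3 a b a = 0.
Proof. rewrite !det3E; ring. Qed.
Lemma det3_abb a b : det3 a b b = 0.
Proof. rewrite !det3E; ring. Qed.

Lemma meetE2 a b c d : meet a b c d = det3 c d a *: b - det3 c d b *: a.
Proof.
rewrite /meet; apply: vec3P; vsimpl; ring.
Qed.

Lemma det3_lin2 (x1 y1 x2 y2 : R) c d z :
  det3 (x1 *: c - y1 *: d) (x2 *: d - y2 *: c) z = (x1 * x2 - y1 * y2) * det3 c d z.
Proof. vsimpl; ring. Qed.

Lemma det3_lin3 (x y : R) c d u v :
  det3 c d (x *: u - y *: v) = x * det3 c d u - y * det3 c d v.
Proof. vsimpl; ring. Qed.

Lemma LL a b c d e f z : det3 (meet a b c d) (meet c d e f) z =
  (det3 a b d * det3 e f c - det3 a b c * det3 e f d) * det3 c d z.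
Proof. by rewrite [meet a b c d]meetE1 [meet c d e f]meetE2 det3_lin2. Qed.

Lemma M5 a b x y c d : det3 c d (meet a b x y) =
  det3 x y a * det3 c d b - det3 x y b * det3 c d a.
Proof. by rewrite meetE2 det3_lin3. Qed.

Lemma M6 a b x y c d : det3 c d (meet a b x y) =
  det3 a b y * det3 c d x - det3 a b x * det3 c d y.
Proof. by rewrite meetE1 det3_lin3. Qed.

Lemma dotv_cross_l a b : dotv (cross a b) a = 0.
Proof. vsimpl; ring. Qed.
Lemma dotv_cross_r a b : dotv (cross a b) b = 0.
Proof. vsimpl; ring. Qed.
Lemma dotv_cross a b q : dotv (cross a b) q = det3 a b q.
Proof. vsimpl; ring. Qed.
Lemma cO1 a b : det3 (cross a b) a b = dotv (cross a b) (cross a b).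
Proof. vsimpl; ring. Qed.
Lemma cO2 o a m : det3 o a (cross o m) = dotv o o * dotv a m - dotv o a * dotv o m.
Proof. vsimpl; ring. Qed.
Lemma cO4 o (m1 m2 : vec) : cross (cross o m1) (cross o m2) = det3 o m1 m2 *: o.
Proof. apply: vec3P; vsimpl; ring. Qed.
Lemma cO5 (p q r : vec) : cross (cross p q) (cross q r) = det3 p q r *: q.
Proof. apply: vec3P; vsimpl; ring. Qed.
Lemma dotvZ u v (k : R) : dotv u (k *: v) = k * dotv u v.
Proof. vsimpl; ring. Qed.

Lemma divKK (k x y : R) : k != 0 -> (k * x) / (k * y) = x / y.
Proof. by move=> nz; rewrite invfM mulrACA mulfV // mul1r. Qed.

Lemma chi_num a b p q r : let O := cross a b in
  cr_num a b (meet a b p q) (meet a b q r) =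
  (dotv O O * dotv O O) * (det3 a b q * det3 p q r).
Proof.
rewrite /cr_num /meet /= cO1.
rewrite [det3 (cross a b) (cross _ _) _]/det3 cO4 dotvZ [det3 (cross a b) _ _]/det3 cO5 dotvZ dotv_cross.
rewrite !dotv_cross; ring.
Qed.

Lemma chi_den a b p q r : let O := cross a b in
  cr_den a b (meet a b p q) (meet a b q r) =
  (dotv O O * dotv O O) * (det3 a p q * det3 b q r).
Proof.
rewrite /cr_den /meet /= !cO2 dotv_cross_l dotv_cross_r.
rewrite /det3; ring.
Qed.

Lemma chiE a b p q r : dotv (cross a b) (cross a b) != 0 ->
  chi a b (meet a b p q) (meet a b q r) =
  (det3 a b q * det3 p q r) / (det3 a p q * det3 b q r).
Proof.
by move=> nz; rewrite /chi chi_num chi_den divKK // mulf_neq0.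
Qed.

Lemma chi_finE a b p q r : chi_finite a b (meet a b p q) (meet a b q r) ->
  det3 a p q * det3 b q r != 0.
Proof. by rewrite /chi_finite chi_den mulf_eq0 negb_or => /andP[]. Qed.

Lemma plucker a b p q r :
  det3 a b q * det3 p q r - det3 a p q * det3 b q r = - (det3 q a r * det3 q p b).
Proof. rewrite !det3E; ring. Qed.

Lemma sq3 (x y z : R) : x * x + y * y + z * z = 0 -> x = 0 /\ y = 0 /\ z = 0.
Proof.
move=> h.
have hx := sqr_ge0 x; have hy := sqr_ge0 y; have hz := sqr_ge0 z.
rewrite !expr2 in hx hy hz.
split; [|split]; apply/eqP; rewrite -sqrf_eq0 expr2 eq_le; apply/andP; split=> //; lra.
Qed.

Lemma OO_nz a b c : det3 a b c != 0 -> dotv (cross a b) (cross a b) != 0.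
Proof.
apply: contra => /eqP; rewrite dotvE => /sq3 [h0 [h1 h2]].
by rewrite det3_cyc det3_cyc /det3 dotvE h0 h1 h2 !mulr0 !addr0.
Qed.

Definition Tw (Q : nat -> vec) (j : nat) := meet (Q j) (Q j.+3) (Q j.+1) (Q j.+4).
Definition lam (Q : nat -> vec) (j : nat) :=
  det3 (Q j) (Q j.+3) (Q j.+4) * det3 (Q j.+2) (Q j.+5) (Q j.+1)
  - det3 (Q j) (Q j.+3) (Q j.+1) * det3 (Q j.+2) (Q j.+5) (Q j.+4).

Lemma TL Q j z : det3 (Tw Q j) (Tw Q j.+1) z = lam Q j * det3 (Q j.+1) (Q j.+4) z.
Proof. by rewrite /Tw LL. Qed.

Lemma TD Q j : det3 (Tw Q j) (Tw Q j.+1) (Tw Q j.+2) = lam Q j * lam Q j.+1.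
Proof. rewrite TL /Tw M5 /lam; ring. Qed.
Lemma TA Q j : det3 (Tw Q j) (Tw Q j.+1) (Tw Q j.+3) =
  lam Q j * - (det3 (Q j.+3) (Q j.+6) (Q j.+4) * det3 (Q j.+1) (Q j.+4) (Q j.+7)).
Proof. rewrite TL /Tw M6 det3_abb; ring. Qed.
Lemma TB Q j : det3 (Tw Q j) (Tw Q j.+1) (Tw Q j.+4) =
  lam Q j * (det3 (Q j.+5) (Q j.+8) (Q j.+4) * det3 (Q j.+1) (Q j.+4) (Q j.+7)).
Proof. rewrite TL /Tw M5 det3_abb; ring. Qed.
Lemma TC Q j : det3 (Tw Q j) (Tw Q j.+3) (Tw Q j.+4) =
  lam Q j.+3 * (det3 (Q j) (Q j.+3) (Q j.+4) * det3 (Q j.+4) (Q j.+7) (Q j.+1)).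
Proof. rewrite det3_cyc TL /Tw M6 ?det3_aab ?det3_aba ?det3_abb; ring. Qed.
Lemma TE0 Q j : det3 (Tw Q j) (Tw Q j.+2) (Tw Q j.+3) =
  lam Q j.+2 * - (det3 (Q j.+1) (Q j.+4) (Q j.+3) * det3 (Q j.+3) (Q j.+6) (Q j)).
Proof. rewrite det3_cyc TL /Tw M5 ?det3_aab ?det3_aba ?det3_abb; ring. Qed.
Lemma TE1 Q j : det3 (Tw Q j.+1) (Tw Q j.+3) (Tw Q j.+4) =
  lam Q j.+3 * - (det3 (Q j.+2) (Q j.+5) (Q j.+4) * det3 (Q j.+4) (Q j.+7) (Q j.+1)).
Proof. rewrite det3_cyc TL /Tw M5 ?det3_aab ?det3_aba ?det3_abb; ring. Qed.
End S.

Ltac sort1 := match goal with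
 | |- context [det3 (?F ?i) (?F ?j) (?F ?k)] =>
    lazymatch eval vm_compute in (Nat.ltb j i) with
    | true => rewrite (det3_sw12 (F i) (F j) (F k))
    | false => lazymatch eval vm_compute in (Nat.ltb k j) with
       | true => rewrite (det3_sw23 (F i) (F j) (F k))
       end
    end
 end.
Ltac sort1H H := match type of H with
 | context [det3 (?F ?i) (?F ?j) (?F ?k)] =>
    lazymatch eval vm_compute in (Nat.ltb j i) with
    | true => rewrite (det3_sw12 (F i) (F j) (F k)) in H
    | false => lazymatch eval vm_compute in (Nat.ltb k j) with
       | true => rewrite (det3_sw23 (F i) (F j) (F k)) in H
       end
    end
 end.
Ltac sortG := repeat sort1.
Ltac sortH H := repeat (sort1H H).

Section S2.
Variable R : realFieldType.
Notation vec := 'cV[R]_3.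

Definition Ue (W : nat -> vec) := det3 (W 0%N) (W 1%N) (W 3%N) * det3 (W 2%N) (W 3%N) (W 4%N).
Definition Ve (W : nat -> vec) := det3 (W 0%N) (W 2%N) (W 3%N) * det3 (W 1%N) (W 3%N) (W 4%N).
Definition We (W : nat -> vec) := det3 (W 3%N) (W 0%N) (W 4%N) * det3 (W 3%N) (W 2%N) (W 1%N).
Definition Uo (W : nat -> vec) := det3 (W 4%N) (W 3%N) (W 1%N) * det3 (W 2%N) (W 1%N) (W 0%N).
Definition Vo (W : nat -> vec) := det3 (W 4%N) (W 2%N) (W 1%N) * det3 (W 3%N) (W 1%N) (W 0%N).
Definition Wo (W : nat -> vec) := det3 (W 1%N) (W 4%N) (W 0%N) * det3 (W 1%N) (W 2%N) (W 3%N).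

Definition H1 (Q : nat -> vec) :=
  det3 (Q 0%N) (Q 1%N) (Q 3%N) * det3 (Q 1%N) (Q 2%N) (Q 4%N) * det3 (Q 2%N) (Q 3%N) (Q 5%N)
  / (lam Q 0 * det3 (Q 1%N) (Q 2%N) (Q 3%N)).

Lemma lam_sh (Q : nat -> vec) j : lam (fun i => Q i.+1) j = lam Q j.+1.
Proof. by []. Qed.

Definition niceQ (Q : nat -> vec) := forall m : nat,
  [/\ det3 (Q m) (Q m.+1) (Q m.+3) != 0, det3 (Q m) (Q m.+1) (Q m.+4) != 0,
      det3 (Q m) (Q m.+3) (Q m.+4) != 0 & det3 (Q m.+1) (Q m.+3) (Q m.+4) != 0].

Notation br Q a b c := (det3 (Q a%N) (Q b%N) (Q c%N)).
Definition H2 (Q : nat -> vec) :=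
  br Q 1 3 4 * br Q 0 1 2 * lam Q 2 / (br Q 0 1 4 * br Q 1 2 5 * br Q 2 3 6 * br Q 3 4 7).
Definition H3 (Q : nat -> vec) :=
  br Q 0 3 6 * br Q 1 4 7 * (br Q 0 1 3 * br Q 1 2 4 * br Q 2 3 5) ^+ 2
  * (br Q 1 2 4 * br Q 2 3 5 * br Q 3 4 6)
  / (lam Q 0 * lam Q 1 * lam Q 2 * br Q 0 2 3 * br Q 1 3 4 ^+ 2 * br Q 0 1 2 * br Q 1 2 3).
Definition H4 (Q : nat -> vec) :=
  br Q 0 1 3 * br Q 1 2 4 ^+ 2 * br Q 2 3 5 ^+ 2 * br Q 3 4 6 * br Q 0 3 6 * br Q 1 4 7
  / (lam Q 1 * br Q 0 2 3 * br Q 1 3 4 * br Q 0 1 4 * br Q 1 2 5 * br Q 2 3 6 * br Q 3 4 7).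

Lemma nzM (x y : R) : x * y != 0 -> x != 0 /\ y != 0.
Proof. by rewrite mulf_eq0 negb_or => /andP. Qed.


End S2.
Ltac splitnz := repeat match goal with
 | H : is_true (?x * ?y != 0) |- _ =>
     let h1 := fresh "nz" in let h2 := fresh "nz" in case: (nzM H) => h1 h2; clear H
 | H : is_true (- ?x != 0) |- _ => rewrite oppr_eq0 in H
 end.
Ltac nzs := repeat (apply/andP; split); try assumption.

Ltac Trw := rewrite ?(TD _ 0) ?(TD _ 1) ?(TD _ 2) ?(TA _ 0) ?(TA _ 1) ?(TB _ 0) ?(TC _ 0)
   ?(TE0 _ 0) ?(TE1 _ 0).
Ltac TrwH H := rewrite ?(TD _ 0) ?(TD _ 1) ?(TD _ 2) ?(TA _ 0) ?(TA _ 1) ?(TB _ 0) ?(TC _ 0)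
   ?(TE0 _ 0) ?(TE1 _ 0) in H.

Ltac facts hN hD hT :=
  have [? ? ? ?] := hN 0%N; have [? ? ? ?] := hN 1%N;
  have [? ? ? ?] := hN 2%N; have [? ? ? ?] := hN 3%N; have [? ? ? ?] := hN 4%N;
  have ? := hD 0%N; have ? := hD 1%N; have ? := hD 2%N; have ? := hD 3%N;
  have ? := hD 4%N; have ? := hD 5%N;
  have ? := hT 0%N; have ? := hT 1%N; have ? := hT 2%N; have ? := hT 3%N.

Section S3.
Variable R : realFieldType.
Notation vec := 'cV[R]_3.

Lemma loc1 (Q : nat -> vec) (hN : niceQ Q)
  (hD : forall m, det3 (Q m) (Q m.+1) (Q m.+2) != 0)
  (hT : forall m, lam Q m != 0)
  (hE : det3 (Q 0%N) (Q 2%N) (Q 3%N) != 0) (hV : Ve (Tw Q) != 0) :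
  - Ue (Tw Q) / We (Tw Q) = (- Ue Q / We Q) * (H1 (fun j => Q j.+1) / H1 Q).
Proof.
rewrite /Ue /We /Ve /H1 in hV *; cbv beta; rewrite !lam_sh.
sortG; sortH hV; Trw; TrwH hV; sortG; sortH hV.
splitnz; facts hN hD hT.
field; nzs.
Qed.

Lemma loc2 (Q : nat -> vec) (hN : niceQ Q)
  (hD : forall m, det3 (Q m) (Q m.+1) (Q m.+2) != 0)
  (hT : forall m, lam Q m != 0)
  (hE : det3 (Q 0%N) (Q 2%N) (Q 3%N) != 0) (hV : Vo (Tw Q) != 0) :
  - Uo (Tw Q) / Wo (Tw Q) = (- Uo Q / Wo Q) * (H2 (fun j => Q j.+1) / H2 Q).
Proof.
rewrite /Uo /Wo /Vo /H2 in hV *; cbv beta; rewrite !lam_sh.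
sortG; sortH hV; Trw; TrwH hV; sortG; sortH hV.
splitnz; facts hN hD hT.
field; nzs.
Qed.

Lemma loc3 (Q : nat -> vec) (hN : niceQ Q)
  (hD : forall m, det3 (Q m) (Q m.+1) (Q m.+2) != 0)
  (hT : forall m, lam Q m != 0)
  (hE : det3 (Q 0%N) (Q 2%N) (Q 3%N) != 0) (hV : Ve (Tw Q) != 0) (hW : Vo (Tw Q) != 0) :
  Ue (Tw Q) * Vo (Tw Q) / (Ve (Tw Q) * Uo (Tw Q)) =
  (Ue Q * Vo Q / (Ve Q * Uo Q)) * (H3 (fun j => Q j.+1) / H3 Q).
Proof.
rewrite /Ue /Uo /Vo /Ve /H3 in hV hW *; cbv beta; rewrite !lam_sh.
sortG; sortH hV; sortH hW; Trw; TrwH hV; TrwH hW; sortG; sortH hV; sortH hW.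
splitnz; facts hN hD hT.
field; nzs.
Qed.

Lemma loc4 (Q : nat -> vec) (hN : niceQ Q)
  (hD : forall m, det3 (Q m) (Q m.+1) (Q m.+2) != 0)
  (hT : forall m, lam Q m != 0)
  (hE : det3 (Q 0%N) (Q 2%N) (Q 3%N) != 0) (hV : Ve (Tw Q) != 0) (hW : Vo (Tw Q) != 0) :
  We (Tw Q) * Vo (Tw Q) / (Ve (Tw Q) * Wo (Tw Q)) =
  (We Q * Vo Q / (Ve Q * Wo Q)) * (H4 (fun j => Q j.+1) / H4 Q).
Proof.
rewrite /We /Wo /Vo /Ve /H4 in hV hW *; cbv beta; rewrite !lam_sh.
sortG; sortH hV; sortH hW; Trw; TrwH hV; TrwH hW; sortG; sortH hV; sortH hW.
splitnz; facts hN hD hT.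
field; nzs.
Qed.
End S3.

Section S4.
Variable R : realFieldType.
Notation vec := 'cV[R]_3.
Variable P : int -> vec.
Variable k : int.
Notation Q := (fun j : nat => P (k + j%:R)).

Lemma args_e (S : int -> vec) : xe_args S (k + 2) =
  (S (k + 0%:R), S (k + 1%:R),
   meet (S (k + 0%:R)) (S (k + 1%:R)) (S (k + 2%:R)) (S (k + 3%:R)),
   meet (S (k + 0%:R)) (S (k + 1%:R)) (S (k + 3%:R)) (S (k + 4%:R))).
Proof.
rewrite /xe_args.
have -> : k + 2 - 2 = k + 0%:R by ring.
have -> : k + 2 - 1 = k + 1%:R by ring.
have -> : k + 2 + 1 = k + 3%:R by ring.
have -> : k + 2 + 2 = k + 4%:R by ring.
by [].
Qed.

Lemma args_o (S : int -> vec) : xo_args S (k + 2) =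
  (S (k + 4%:R), S (k + 3%:R),
   meet (S (k + 4%:R)) (S (k + 3%:R)) (S (k + 2%:R)) (S (k + 1%:R)),
   meet (S (k + 4%:R)) (S (k + 3%:R)) (S (k + 1%:R)) (S (k + 0%:R))).
Proof.
rewrite /xo_args.
have -> : k + 2 - 2 = k + 0%:R by ring.
have -> : k + 2 - 1 = k + 1%:R by ring.
have -> : k + 2 + 1 = k + 3%:R by ring.
have -> : k + 2 + 2 = k + 4%:R by ring.
by [].
Qed.

Lemma T3_win (j : nat) : T3 P (k + j%:R) = Tw Q j.
Proof.
rewrite /T3 /Tw.
have -> : k + j%:R + 3 = k + j.+3%:R by ring.
have -> : k + j%:R + 1 = k + j.+1%:R by ring.
have -> : k + j%:R + 4 = k + j.+4%:R by ring.
by [].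
Qed.

Lemma wN : nice3 P -> niceQ Q.
Proof.
move=> h m; case: (h (k + m%:R)).
have -> : k + m%:R + 3 = k + m.+3%:R by ring.
have -> : k + m%:R + 1 = k + m.+1%:R by ring.
have -> : k + m%:R + 4 = k + m.+4%:R by ring.
by split.
Qed.

Lemma wD : (forall i, det3 (P i) (P (i + 1)) (P (i + 2)) != 0) ->
  forall m, det3 (Q m) (Q m.+1) (Q m.+2) != 0.
Proof.
move=> h m; have := h (k + m%:R).
have -> : k + m%:R + 1 = k + m.+1%:R by ring.
have -> : k + m%:R + 2 = k + m.+2%:R by ring.
by [].
Qed.

Lemma wT : (forall i, det3 (T3 P i) (T3 P (i + 1)) (T3 P (i + 2)) != 0) ->
  forall m, lam Q m != 0.
Proof.
move=> h m; have := h (k + m%:R).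
have -> : k + m%:R + 1 = k + m.+1%:R by ring.
have -> : k + m%:R + 2 = k + m.+2%:R by ring.
rewrite !T3_win TD mulf_eq0 negb_or => /andP[] //.
Qed.

Lemma wE : nice3 P -> det3 (Q 0%N) (Q 2%N) (Q 3%N) != 0.
Proof.
move=> h; case: (h (k - 1)) => _ _ _.
have -> : k - 1 + 1 = k + 0%:R by ring.
have -> : k - 1 + 3 = k + 2%:R by ring.
have -> : k - 1 + 4 = k + 3%:R by ring.
by [].
Qed.
End S4.

Section S5.
Variable R : realFieldType.
Notation vec := 'cV[R]_3.

Lemma det3_rev (a b c : vec) : det3 a b c = - det3 c b a.
Proof. rewrite !det3E; ring. Qed.

Lemma UVWe (W : nat -> vec) : Ue W - Ve W = - We W.
Proof. exact: plucker. Qed.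
Lemma UVWo (W : nat -> vec) : Uo W - Vo W = - Wo W.
Proof. exact: plucker. Qed.

Lemma xfrac (U V W : R) : V != 0 -> U - V = - W -> (U / V) / (U / V - 1) = - U / W.
Proof.
move=> hV hW; have [W0|Wn] := eqVneq W 0.
  have eUV : U = V by apply/eqP; rewrite -subr_eq0 hW W0 oppr0.
  by rewrite W0 eUV divff // subrr !invr0 !mulr0.
have -> : U / V - 1 = - W / V by rewrite -hW; field.
by field; rewrite Wn hV.
Qed.

Lemma frac3 (U V U' V' : R) : (U / V) / (U' / V') = U * V' / (V * U').
Proof. by rewrite invf_div mulf_div. Qed.

Lemma frac4 (U V W U' V' W' : R) : V != 0 -> V' != 0 -> U - V = - W -> U' - V' = - W' ->
  (1 - U / V) / (1 - U' / V') = W * V' / (V * W').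
Proof.
move=> hV hV' h h'.
have -> : 1 - U / V = W / V by rewrite -[W]opprK -h; field.
have -> : 1 - U' / V' = W' / V' by rewrite -[W']opprK -h'; field.
exact: frac3.
Qed.

Variable P : int -> vec.
Hypothesis hn : nice3 P.
Hypothesis hd : forall i, det3 (P i) (P (i + 1)) (P (i + 2)) != 0.
Hypothesis ht : forall i, det3 (T3 P i) (T3 P (i + 1)) (T3 P (i + 2)) != 0.
Variable k : int.
Notation Q := (fun j : nat => P (k + j%:R)).

Lemma OO_T : dotv (cross (Tw Q 0) (Tw Q 1)) (cross (Tw Q 0) (Tw Q 1)) != 0.
Proof.
apply: (@OO_nz _ _ _ (Tw Q 2)); rewrite TD mulf_neq0 //; exact: (@wT _ P k ht).
Qed.
Lemma OO_P : dotv (cross (Q 0%N) (Q 1%N)) (cross (Q 0%N) (Q 1%N)) != 0.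
Proof. apply: (@OO_nz _ _ _ (Q 2%N)); exact: (@wD _ P k hd 0%N). Qed.
Lemma OO_T' : dotv (cross (Tw Q 4) (Tw Q 3)) (cross (Tw Q 4) (Tw Q 3)) != 0.
Proof.
apply: (@OO_nz _ _ _ (Tw Q 2)); rewrite det3_sw12 oppr_eq0 det3_cyc det3_cyc.
rewrite TD mulf_neq0 //; exact: (@wT _ P k ht).
Qed.
Lemma OO_P' : dotv (cross (Q 4%N) (Q 3%N)) (cross (Q 4%N) (Q 3%N)) != 0.
Proof.
apply: (@OO_nz _ _ _ (Q 2%N)); rewrite det3_sw12 oppr_eq0 det3_cyc det3_cyc.
exact: (@wD _ P k hd 2%N).
Qed.

Lemma xeT : xe (T3 P) (k + 2) = Ue (Tw Q) / Ve (Tw Q).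
Proof. by rewrite /xe args_e !T3_win /app4 chiE // OO_T. Qed.
Lemma xoT : xo (T3 P) (k + 2) = Uo (Tw Q) / Vo (Tw Q).
Proof. by rewrite /xo args_o !T3_win /app4 chiE // OO_T'. Qed.
Lemma xeP : xe P (k + 2) = Ue Q / Ve Q.
Proof. by rewrite /xe args_e /app4 chiE //; apply: OO_P. Qed.
Lemma xoP : xo P (k + 2) = Uo Q / Vo Q.
Proof. by rewrite /xo args_o /app4 chiE //; apply: OO_P'. Qed.
Lemma finT : xe_fin (T3 P) (k + 2) -> Ve (Tw Q) != 0.
Proof. by rewrite /xe_fin args_e !T3_win /app4 => /chi_finE. Qed.
Lemma finT' : xo_fin (T3 P) (k + 2) -> Vo (Tw Q) != 0.
Proof. by rewrite /xo_fin args_o !T3_win /app4 => /chi_finE. Qed.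
Lemma VeP : Ve Q != 0.
Proof. rewrite /Ve mulf_neq0 //; [exact: (@wE _ P k hn) | by case: (@wN _ P k hn 0%N)]. Qed.
Lemma VoP : Vo Q != 0.
Proof.
rewrite /Vo.
case: (@wN _ P k hn 1%N) => h _ _ _; case: (@wN _ P k hn 0%N) => h' _ _ _.
by rewrite (det3_rev (P (k + 4%:R))) (det3_rev (P (k + 3%:R))) mulrNN mulf_neq0.
Qed.

Lemma step1 : xe_fin (T3 P) (k + 2) ->
  xe (T3 P) (k + 2) / (xe (T3 P) (k + 2) - 1) =
  (xe P (k + 2) / (xe P (k + 2) - 1)) * (H1 (fun j => Q j.+1) / H1 Q).
Proof.
move=> hf; rewrite xeT xeP (xfrac (W := We (Tw Q))) ?UVWe ?(finT hf) //.
rewrite (xfrac (W := We Q)) ?UVWe ?VeP //.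
exact: (loc1 (@wN _ P k hn) (@wD _ P k hd) (@wT _ P k ht) (@wE _ P k hn) (finT hf)).
Qed.

Lemma step2 : xo_fin (T3 P) (k + 2) ->
  xo (T3 P) (k + 2) / (xo (T3 P) (k + 2) - 1) =
  (xo P (k + 2) / (xo P (k + 2) - 1)) * (H2 (fun j => Q j.+1) / H2 Q).
Proof.
move=> hf; rewrite xoT xoP (xfrac (W := Wo (Tw Q))) ?UVWo ?(finT' hf) //.
rewrite (xfrac (W := Wo Q)) ?UVWo ?VoP //.
exact: (loc2 (@wN _ P k hn) (@wD _ P k hd) (@wT _ P k ht) (@wE _ P k hn) (finT' hf)).
Qed.

Lemma step3 : xe_fin (T3 P) (k + 2) -> xo_fin (T3 P) (k + 2) ->
  xe (T3 P) (k + 2) / xo (T3 P) (k + 2) =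
  (xe P (k + 2) / xo P (k + 2)) * (H3 (fun j => Q j.+1) / H3 Q).
Proof.
move=> hf hf'; rewrite xeT xoT xeP xoP [LHS]frac3 (frac3 (Ue Q)).
exact: (loc3 (@wN _ P k hn) (@wD _ P k hd) (@wT _ P k ht) (@wE _ P k hn) (finT hf) (finT' hf')).
Qed.

Lemma step4 : xe_fin (T3 P) (k + 2) -> xo_fin (T3 P) (k + 2) ->
  (1 - xe (T3 P) (k + 2)) / (1 - xo (T3 P) (k + 2)) =
  ((1 - xe P (k + 2)) / (1 - xo P (k + 2))) * (H4 (fun j => Q j.+1) / H4 Q).
Proof.
move=> hf hf'; rewrite xeT xoT xeP xoP.
rewrite (frac4 (W := We (Tw Q)) (W' := Wo (Tw Q))) ?UVWe ?UVWo ?(finT hf) ?(finT' hf') //.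
rewrite (frac4 (W := We Q) (W' := Wo Q)) ?UVWe ?UVWo ?VeP ?VoP //.
exact: (loc4 (@wN _ P k hn) (@wD _ P k hd) (@wT _ P k ht) (@wE _ P k hn) (finT hf) (finT' hf')).
Qed.
End S5.

Section S6.
Variable R : realFieldType.
Notation vec := 'cV[R]_3.

Definition dM (M : 'M[R]_3) := M 0 0 * (M 1 1 * M 2 2 - M 1 2 * M 2 1)
  - M 0 1 * (M 1 0 * M 2 2 - M 1 2 * M 2 0) + M 0 2 * (M 1 0 * M 2 1 - M 1 1 * M 2 0).

Lemma mxv (M : 'M[R]_3) (u : vec) i : (M *m u) i 0 = M i 0 * u 0 0 + M i 1 * u 1 0 + M i 2 * u 2 0.
Proof.
rewrite mxE !big_ord_recl big_ord0 addr0 addrA.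
have e0 : ord0 = 0 :> 'I_3 by apply: val_inj.
have e1 : lift ord0 ord0 = 1 :> 'I_3 by apply: val_inj.
have e2 : lift ord0 (lift ord0 ord0) = 2 :> 'I_3 by apply: val_inj.
by rewrite e2 e1 e0.
Qed.

Lemma mxsv (a : R) (M : 'M[R]_3) (u : vec) i :
  (a *: (M *m u)) i 0 = a * (M i 0 * u 0 0 + M i 1 * u 1 0 + M i 2 * u 2 0).
Proof. by rewrite mxE mxv. Qed.

Lemma det3_scale (a b c : R) M (u v w : vec) :
  det3 (a *: (M *m u)) (b *: (M *m v)) (c *: (M *m w)) = a * b * c * dM M * det3 u v w.
Proof. rewrite !det3E !mxsv /dM; ring. Qed.

Lemma lam_scale (s : nat -> R) M (Q : nat -> vec) j :
  lam (fun i => s i *: (M *m Q i)) j =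
  s j * s j.+1 * s j.+2 * s j.+3 * s j.+4 * s j.+5 * dM M ^+ 2 * lam Q j.
Proof. rewrite /lam !det3_scale; ring. Qed.

Lemma lam_ext (S S' : nat -> vec) j : (forall i, S i = S' i) -> lam S j = lam S' j.
Proof. by move=> E; rewrite /lam !E. Qed.

Lemma H1_ext (S S' : nat -> vec) : (forall i, S i = S' i) -> H1 S = H1 S'.
Proof. by move=> E; rewrite /H1 !(lam_ext _ E) !E. Qed.
Lemma H2_ext (S S' : nat -> vec) : (forall i, S i = S' i) -> H2 S = H2 S'.
Proof. by move=> E; rewrite /H2 !(lam_ext _ E) !E. Qed.
Lemma H3_ext (S S' : nat -> vec) : (forall i, S i = S' i) -> H3 S = H3 S'.
Proof. by move=> E; rewrite /H3 !(lam_ext _ E) !E. Qed.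
Lemma H4_ext (S S' : nat -> vec) : (forall i, S i = S' i) -> H4 S = H4 S'.
Proof. by move=> E; rewrite /H4 !(lam_ext _ E) !E. Qed.

Ltac scale_tac hN hD hT :=
  cbv beta; rewrite !det3_scale ?lam_scale; facts hN hD hT; field;
  repeat (apply/andP; split); try assumption.

Lemma H1_scale (s : nat -> R) M (Q : nat -> vec) : (forall j, s j != 0) -> dM M != 0 ->
  niceQ Q -> (forall m, det3 (Q m) (Q m.+1) (Q m.+2) != 0) -> (forall m, lam Q m != 0) ->
  det3 (Q 0%N) (Q 2%N) (Q 3%N) != 0 -> H1 (fun i => s i *: (M *m Q i)) = H1 Q.
Proof.
move=> hs hM hN hD hT hE; rewrite /H1.
have ? := hs 0%N; have ? := hs 1%N; have ? := hs 2%N; have ? := hs 3%N; have ? := hs 4%N;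
have ? := hs 5%N; have ? := hs 6%N; have ? := hs 7%N.
scale_tac hN hD hT.
Qed.

Lemma H2_scale (s : nat -> R) M (Q : nat -> vec) : (forall j, s j != 0) -> dM M != 0 ->
  niceQ Q -> (forall m, det3 (Q m) (Q m.+1) (Q m.+2) != 0) -> (forall m, lam Q m != 0) ->
  det3 (Q 0%N) (Q 2%N) (Q 3%N) != 0 -> H2 (fun i => s i *: (M *m Q i)) = H2 Q.
Proof.
move=> hs hM hN hD hT hE; rewrite /H2.
have ? := hs 0%N; have ? := hs 1%N; have ? := hs 2%N; have ? := hs 3%N; have ? := hs 4%N;
have ? := hs 5%N; have ? := hs 6%N; have ? := hs 7%N.
scale_tac hN hD hT.
Qed.
Lemma H3_scale (s : nat -> R) M (Q : nat -> vec) : (forall j, s j != 0) -> dM M != 0 ->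
  niceQ Q -> (forall m, det3 (Q m) (Q m.+1) (Q m.+2) != 0) -> (forall m, lam Q m != 0) ->
  det3 (Q 0%N) (Q 2%N) (Q 3%N) != 0 -> H3 (fun i => s i *: (M *m Q i)) = H3 Q.
Proof.
move=> hs hM hN hD hT hE; rewrite /H3.
have ? := hs 0%N; have ? := hs 1%N; have ? := hs 2%N; have ? := hs 3%N; have ? := hs 4%N;
have ? := hs 5%N; have ? := hs 6%N; have ? := hs 7%N.
scale_tac hN hD hT.
Qed.
Lemma H4_scale (s : nat -> R) M (Q : nat -> vec) : (forall j, s j != 0) -> dM M != 0 ->
  niceQ Q -> (forall m, det3 (Q m) (Q m.+1) (Q m.+2) != 0) -> (forall m, lam Q m != 0) ->
  det3 (Q 0%N) (Q 2%N) (Q 3%N) != 0 -> H4 (fun i => s i *: (M *m Q i)) = H4 Q.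
Proof.
move=> hs hM hN hD hT hE; rewrite /H4.
have ? := hs 0%N; have ? := hs 1%N; have ? := hs 2%N; have ? := hs 3%N; have ? := hs 4%N;
have ? := hs 5%N; have ? := hs 6%N; have ? := hs 7%N.
scale_tac hN hD hT.
Qed.

Ltac nz_tac := repeat (first [assumption | apply: mulf_neq0 | apply: expf_neq0 | rewrite invr_eq0]).

Lemma H1_nz (Q : nat -> vec) : niceQ Q -> (forall m, det3 (Q m) (Q m.+1) (Q m.+2) != 0) ->
  (forall m, lam Q m != 0) -> H1 Q != 0.
Proof. move=> hN hD hT; rewrite /H1; facts hN hD hT; nz_tac. Qed.
Lemma H2_nz (Q : nat -> vec) : niceQ Q -> (forall m, det3 (Q m) (Q m.+1) (Q m.+2) != 0) ->
  (forall m, lam Q m != 0) -> H2 Q != 0.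
Proof. move=> hN hD hT; rewrite /H2; facts hN hD hT; nz_tac. Qed.
Lemma H3_nz (Q : nat -> vec) : niceQ Q -> (forall m, det3 (Q m) (Q m.+1) (Q m.+2) != 0) ->
  (forall m, lam Q m != 0) -> det3 (Q 0%N) (Q 2%N) (Q 3%N) != 0 ->
  det3 (Q 0%N) (Q 3%N) (Q 6%N) != 0 -> det3 (Q 1%N) (Q 4%N) (Q 7%N) != 0 -> H3 Q != 0.
Proof. move=> hN hD hT hE k1 k2; rewrite /H3; facts hN hD hT; nz_tac. Qed.
Lemma H4_nz (Q : nat -> vec) : niceQ Q -> (forall m, det3 (Q m) (Q m.+1) (Q m.+2) != 0) ->
  (forall m, lam Q m != 0) -> det3 (Q 0%N) (Q 2%N) (Q 3%N) != 0 ->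
  det3 (Q 0%N) (Q 3%N) (Q 6%N) != 0 -> det3 (Q 1%N) (Q 4%N) (Q 7%N) != 0 -> H4 Q != 0.
Proof. move=> hN hD hT hE k1 k2; rewrite /H4; facts hN hD hT; nz_tac. Qed.

Lemma kap_nz (Q : nat -> vec) : Ve (Tw Q) != 0 ->
  det3 (Q 0%N) (Q 3%N) (Q 6%N) != 0 /\ det3 (Q 1%N) (Q 4%N) (Q 7%N) != 0.
Proof.
move=> h; rewrite /Ve in h; sortH h; TrwH h; sortH h; splitnz; split; assumption.
Qed.

Lemma tele (h : nat -> R) N : (forall m, (m < N)%N -> h m != 0) ->
  \prod_(i < N) (h i.+1 / h i) * h 0%N = h N.
Proof.
elim: N => [|N IH] hh; first by rewrite big_ord0 mul1r.
rewrite big_ord_recr /= -mulrA (mulrC (h N.+1 / h N)) mulrA IH; last first.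
  by move=> m lt; apply: hh; apply: ltn_trans lt _.
by rewrite mulrCA divff ?mulr1 //; apply: hh.
Qed.

Lemma assemble n (f f' h : nat -> R) :
  (forall i, (i < n)%N -> f' i = f i * (h i.+1 / h i)) ->
  (forall m, (m < n)%N -> h m != 0) -> h n = h 0%N ->
  \prod_(i < n) f' i = \prod_(i < n) f i.
Proof.
move=> hs hz hp.
rewrite (eq_bigr (fun i : 'I_n => f i * (h i.+1 / h i))); last by move=> i _; apply: hs.
rewrite big_split /=.
case: n hs hz hp => [|n] hs hz hp; first by rewrite !big_ord0 mulr1.
have t := tele hz; rewrite hp in t.
have h0 : h 0%N != 0 by apply: hz.
have -> : \prod_(i < n.+1) (h i.+1 / h i) = 1.
  by apply: (mulIf h0); rewrite t mul1r.
by rewrite mulr1.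
Qed.

Section Main.
Variable P : int -> vec.
Variable n : nat.
Hypothesis hn : nice3 P.
Hypothesis hd : forall i, det3 (P i) (P (i + 1)) (P (i + 2)) != 0.
Hypothesis ht : forall i, det3 (T3 P i) (T3 P (i + 1)) (T3 P (i + 2)) != 0.
Hypothesis htw : twisted_ngon n P.

Lemma per (Hx : (nat -> vec) -> R)
  (Hext : forall S S', (forall j, S j = S' j) -> Hx S = Hx S')
  (Hscale : forall (s : nat -> R) M (Q : nat -> vec), (forall j, s j != 0) -> dM M != 0 ->
     niceQ Q -> (forall m, det3 (Q m) (Q m.+1) (Q m.+2) != 0) -> (forall m, lam Q m != 0) ->
     det3 (Q 0%N) (Q 2%N) (Q 3%N) != 0 -> Hx (fun i => s i *: (M *m Q i)) = Hx Q) :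
  Hx (fun j : nat => P (n%:Z - 2 + j%:R)) = Hx (fun j : nat => P (0%:Z - 2 + j%:R)).
Proof.
case: htw => [[M [_ hM]] _].
have ex : forall i, exists c, (c != 0) && (P (i + n%:Z) == c *: (M *m P i)).
  by move=> i; case: (hM i) => c [c0 e]; exists c; rewrite c0 e eqxx.
pose cf i := xchoose (ex i).
have cfP i : (cf i != 0) /\ P (i + n%:Z) = cf i *: (M *m P i).
  by case/andP: (xchooseP (ex i)) => a /eqP b.
pose s (j : nat) := cf (0%:Z - 2 + j%:R).
have E : forall j : nat, P (n%:Z - 2 + j%:R) = s j *: (M *m P (0%:Z - 2 + j%:R)).
  move=> j; rewrite -(cfP _).2; congr P; ring.
rewrite (Hext _ _ E) Hscale //.
- by move=> j; apply: (cfP _).1.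
- have h := @wD _ P (n%:Z - 2) hd 0%N; rewrite !E det3_scale in h.
  by case: (nzM h) => h1 _; case: (nzM h1).
- exact: (@wN _ P (0%:Z - 2) hn).
- exact: (@wD _ P (0%:Z - 2) hd).
- exact: (@wT _ P (0%:Z - 2) ht).
- exact: (@wE _ P (0%:Z - 2) hn).
Qed.
End Main.
End S6.

Section S7.
Variable R : realFieldType.
Notation vec := 'cV[R]_3.
Variable P : int -> vec.
Variable n : nat.
Hypothesis hn : nice3 P.
Hypothesis hd : forall i, det3 (P i) (P (i + 1)) (P (i + 2)) != 0.
Hypothesis ht : forall i, det3 (T3 P i) (T3 P (i + 1)) (T3 P (i + 2)) != 0.
Hypothesis htw : twisted_ngon n P.

Lemma F1main : F1_def n (T3 P) -> F1 n (T3 P) = F1 n P.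
Proof.
move=> hF; rewrite /F1.
apply: (assemble (f := fun i : nat => xe P i%:Z / (xe P i%:Z - 1))
  (f' := fun i : nat => xe (T3 P) i%:Z / (xe (T3 P) i%:Z - 1))
  (h := fun m : nat => H1 (fun j : nat => P (m%:Z - 2 + j%:R)))).
- move=> i lt.
  have hf : xe_fin (T3 P) (i%:Z - 2 + 2) by rewrite subrK; exact: (hF (Ordinal lt)).1.
  have := step1 hn hd ht hf; rewrite subrK => ->.
  by congr (_ * (_ / _)); apply: H1_ext => j /=; congr P; ring.
- move=> m lt; apply: H1_nz; [exact: wN | exact: wD | exact: wT].
- exact: (per hn hd ht htw (@H1_ext _) (@H1_scale _)).
Qed.

Lemma F2main : F2_def n (T3 P) -> F2 n (T3 P) = F2 n P.
Proof.
move=> hF; rewrite /F2.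
apply: (assemble (f := fun i : nat => xo P i%:Z / (xo P i%:Z - 1))
  (f' := fun i : nat => xo (T3 P) i%:Z / (xo (T3 P) i%:Z - 1))
  (h := fun m : nat => H2 (fun j : nat => P (m%:Z - 2 + j%:R)))).
- move=> i lt.
  have hf : xo_fin (T3 P) (i%:Z - 2 + 2) by rewrite subrK; exact: (hF (Ordinal lt)).1.
  have := step2 hn hd ht hf; rewrite subrK => ->.
  by congr (_ * (_ / _)); apply: H2_ext => j /=; congr P; ring.
- move=> m lt; apply: H2_nz; [exact: wN | exact: wD | exact: wT].
- exact: (per hn hd ht htw (@H2_ext _) (@H2_scale _)).
Qed.

Lemma F3main : F3_def n (T3 P) -> F3 n (T3 P) = F3 n P.
Proof.
move=> hF; rewrite /F3.
apply: (assemble (f := fun i : nat => xe P i%:Z / xo P i%:Z)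
  (f' := fun i : nat => xe (T3 P) i%:Z / xo (T3 P) i%:Z)
  (h := fun m : nat => H3 (fun j : nat => P (m%:Z - 2 + j%:R)))).
- move=> i lt.
  case: (hF (Ordinal lt)) => f1 f2 _.
  have hf : xe_fin (T3 P) (i%:Z - 2 + 2) by rewrite subrK; exact: f1.
  have hf' : xo_fin (T3 P) (i%:Z - 2 + 2) by rewrite subrK; exact: f2.
  have := step3 hn hd ht hf hf'; rewrite subrK => ->.
  by congr (_ * (_ / _)); apply: H3_ext => j /=; congr P; ring.
- move=> m lt; case: (hF (Ordinal lt)) => f1 _ _.
  have hf : xe_fin (T3 P) (m%:Z - 2 + 2) by rewrite subrK; exact: f1.
  have [k1 k2] := kap_nz (finT hf).
  apply: H3_nz; [exact: wN | exact: wD | exact: wT | exact: wE | exact: k1 | exact: k2].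
- exact: (per hn hd ht htw (@H3_ext _) (@H3_scale _)).
Qed.

Lemma F4main : F4_def n (T3 P) -> F4 n (T3 P) = F4 n P.
Proof.
move=> hF; rewrite /F4.
apply: (assemble (f := fun i : nat => (1 - xe P i%:Z) / (1 - xo P i%:Z))
  (f' := fun i : nat => (1 - xe (T3 P) i%:Z) / (1 - xo (T3 P) i%:Z))
  (h := fun m : nat => H4 (fun j : nat => P (m%:Z - 2 + j%:R)))).
- move=> i lt.
  case: (hF (Ordinal lt)) => f1 f2 _.
  have hf : xe_fin (T3 P) (i%:Z - 2 + 2) by rewrite subrK; exact: f1.
  have hf' : xo_fin (T3 P) (i%:Z - 2 + 2) by rewrite subrK; exact: f2.
  have := step4 hn hd ht hf hf'; rewrite subrK => ->.
  by congr (_ * (_ / _)); apply: H4_ext => j /=; congr P; ring.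
- move=> m lt; case: (hF (Ordinal lt)) => f1 _ _.
  have hf : xe_fin (T3 P) (m%:Z - 2 + 2) by rewrite subrK; exact: f1.
  have [k1 k2] := kap_nz (finT hf).
  apply: H4_nz; [exact: wN | exact: wD | exact: wT | exact: wE | exact: k1 | exact: k2].
- exact: (per hn hd ht htw (@H4_ext _) (@H4_scale _)).
Qed.
End S7.

Theorem mainTheorem17 (R : realFieldType) (n : nat) (P : int -> 'cV[R]_3) :
  twisted_ngon n P -> nice3 P -> twisted_ngon n (T3 P) ->
  [/\ (F1_def n P -> F1_def n (T3 P) -> F1 n (T3 P) = F1 n P),
      (F2_def n P -> F2_def n (T3 P) -> F2 n (T3 P) = F2 n P),
      (F3_def n P -> F3_def n (T3 P) -> F3 n (T3 P) = F3 n P) &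
      (F4_def n P -> F4_def n (T3 P) -> F4 n (T3 P) = F4 n P)].
Proof.
move=> htw hn htwT.
have hd := htw.2; have ht := htwT.2.
split=> _.
- exact: (F1main hn hd ht htw).
- exact: (F2main hn hd ht htw).
- exact: (F3main hn hd ht htw).
- exact: (F4main hn hd ht htw).
Qed.
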